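(* Let $m\ge n\ge1$, let $B=\{\cos(\theta)|0\rangle+\sin(\theta)|1\rangle\mid0\le\theta<2\pi\}$ and $B^{\otimes n}=\{|b_1\rangle\otimes\cdots\otimes|b_n\rangle\mid|b_j\rangle\in B\}$. Let $\mathcal E=\{\sqrt{p_i}U_i\mid1\le i\le N\}$ with each $U_i$ unitary on $\mathcal H_{2^m}$ and $\sum_ip_i=1$, let $\rho_a$ be an $(m-n)$-qubit density matrix and $\rho_0$ an $m$-qubit density matrix. If $[B^{\otimes n},\mathcal E,\rho_a,\rho_0]$ is a private quantum channel, then $H(p_1,\dots,p_N)\ge n$, and in particular $N\ge2^n$.
   Context: $\mathcal{H}_{2^k}$ denotes the Hilbert space of $k$ qubits. $H(p_1,\dots,p_N)=-\sum_ip_i\log_2p_i$. Definition (private quantum channel, PQC): for a set $\mathcal S\subseteq\mathcal H_{2^n}$ of pure $n$-qubit states, $\mathcal E=\{\sqrt{p_i}U_i\}$ with $U_i$ unitary on $\mathcal H_{2^m}$, $p_i\ge0$, $\sum_ip_i=1$, $\rho_a$ an $(m-n)$-qubit density matrix and $\rho_0$ an $m$-qubit density matrix, $[\mathcal S,\mathcal E,\rho_a,\rho_0]$ is a PQC iff for all $|\phi\rangle\in\mathcal S$, $\sum_ip_iU_i(|\phi\rangle\langle\phi|\otimes\rho_a)U_i^\dagger=\rho_0$. *)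

(* Defs.v *)
From mathcomp Require Import all_boot all_algebra.
From mathcomp Require Import complex mxtens sesquilinear spectral.
From mathcomp Require Import reals exp trigo.
Set Implicit Arguments.
Unset Strict Implicit.
Unset Printing Implicit Defensive.
Import GRing.Theory Num.Theory.
Local Open Scope ring_scope.

Section QDefs.
Variable R : realType.
Local Notation C := R[i].

Definition rC (x : R) : C := (x%:C)%C.

Definition adj {p q : nat} (A : 'M[C]_(p, q)) : 'M[C]_(q, p) :=
  \matrix_(i, j) (A j i)^*.

Definition psd {d : nat} (A : 'M[C]_d) : Prop :=
  adj A = A /\ forall v : 'cV[C]_d, 0 <= (adj v *m A *m v) 0 0.

Definition density (k : nat) (rho : 'M[C]_(2 ^ k)) : Prop :=
  psd rho /\ \tr rho = 1.

Definition qubitB (t : R) : 'cV[C]_2 :=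
  \col_(i < 2) (if i == ord0 then rC (cos t) else rC (sin t)).

Fixpoint prodB (k : nat) (t : nat -> R) : 'cV[C]_(2 ^ k) :=
  match k with
  | 0 => const_mx 1
  | k'.+1 => castmx (esym (expnS 2 k'), muln1 1)
               (qubitB (t 0) *t prodB k' (fun j => t j.+1))
  end.

Definition Btens (n : nat) (phi : 'cV[C]_(2 ^ n)) : Prop :=
  exists t : nat -> R, (forall j, (j < n)%N -> 0 <= t j < 2 * pi) /\ phi = prodB n t.

Lemma qubit_dim (n m : nat) : (n <= m)%N -> (2 ^ n * 2 ^ (m - n) = 2 ^ m)%N.
Proof. by move=> h; rewrite -expnD subnKC. Qed.

Definition join_state (n m : nat) (hnm : (n <= m)%N)
  (phi : 'cV[C]_(2 ^ n)) (rho_a : 'M[C]_(2 ^ (m - n))) : 'M[C]_(2 ^ m) :=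
  castmx (qubit_dim hnm, qubit_dim hnm) ((phi *m adj phi) *t rho_a).

(* [S, E = {sqrt(p_i) U_i}, rho_a, rho_0] is a private quantum channel *)
Definition PQC (n m : nat) (hnm : (n <= m)%N) (S : 'cV[C]_(2 ^ n) -> Prop)
  (N : nat) (p : 'I_N -> R) (U : 'I_N -> 'M[C]_(2 ^ m))
  (rho_a : 'M[C]_(2 ^ (m - n))) (rho0 : 'M[C]_(2 ^ m)) : Prop :=
  forall phi, S phi ->
    \sum_(i < N) rC (p i) *: (U i *m join_state hnm phi rho_a *m adj (U i)) = rho0.

Definition log2 (x : R) : R := ln x / ln 2.

Definition entropy (N : nat) (p : 'I_N -> R) : R :=
  - \sum_(i < N) (if p i == 0 then 0 else p i * log2 (p i)).

End QDefs.

(* Main.v *)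
Require Import Defs.
From mathcomp Require Import all_boot all_algebra.
From mathcomp Require Import complex mxtens sesquilinear spectral.
From mathcomp Require Import reals exp trigo.
From Stdlib Require List.
From mathcomp Require Import lra.
Import GRing.Theory Num.Theory.
From mathcomp Require Import order.
Import Order.TTheory.
Local Open Scope ring_scope.
Local Open Scope sesquilinear_scope.

Section Aux.
Variable R : realType.
Local Notation C := R[i].

Lemma adjK {p q} (A : 'M[C]_(p, q)) : adj (adj A) = A.
Proof. by apply/matrixP => i j; rewrite !mxE conjCK. Qed.

Lemma adj_mul {p q r} (A : 'M[C]_(p, q)) (B : 'M[C]_(q, r)) :
  adj (A *m B) = adj B *m adj A.
Proof.
apply/matrixP => i j; rewrite !mxE rmorph_sum; apply: eq_bigr => k _.
by rewrite !mxE rmorphM mulrC.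
Qed.

Lemma adj_tens {p q r s} (A : 'M[C]_(p, q)) (B : 'M[C]_(r, s)) :
  adj (A *t B) = adj A *t adj B.
Proof. by apply/matrixP => i j; rewrite !mxE rmorphM. Qed.

Lemma adj1 {p} : adj (1%:M : 'M[C]_p) = 1%:M.
Proof. by apply/matrixP => i j; rewrite !mxE eq_sym rmorph_nat. Qed.

Lemma adj_cast {a a' b b'} (ea : a = a') (eb : b = b') (A : 'M[C]_(a, b)) :
  adj (castmx (ea, eb) A) = castmx (eb, ea) (adj A).
Proof. by case: a' / ea; case: b' / eb; rewrite !castmx_id. Qed.

Lemma castmx_mulmx {a a' b b' c c'} (ea : a = a') (eb : b = b') (ec : c = c')
  (A : 'M[C]_(a, b)) (B : 'M[C]_(b, c)) :
  castmx (ea, eb) A *m castmx (eb, ec) B = castmx (ea, ec) (A *m B).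
Proof. by case: a' / ea; case: b' / eb; case: c' / ec; rewrite !castmx_id. Qed.

Lemma castmx_sum {T} {a a' b b'} (ea : a = a') (eb : b = b') (s : seq T)
  (F : T -> 'M[C]_(a, b)) :
  castmx (ea, eb) (\sum_(x <- s) F x) = \sum_(x <- s) castmx (ea, eb) (F x).
Proof.
by case: a' / ea; case: b' / eb; rewrite castmx_id; apply: eq_bigr => x _; rewrite castmx_id.
Qed.

Lemma castmx1 {a a'} (ea : a = a') : castmx (ea, ea) (1%:M : 'M[C]_a) = 1%:M.
Proof. by case: a' / ea; rewrite castmx_id. Qed.

Lemma psd_cast {a a'} (ea : a = a') (A : 'M[C]_a) : psd A -> psd (castmx (ea, ea) A).
Proof. by case: a' / ea; rewrite castmx_id. Qed.

Lemma tensmxDr {p q r s} (A : 'M[C]_(p, q)) (B B' : 'M[C]_(r, s)) :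
  A *t (B + B') = A *t B + A *t B'.
Proof. by apply/matrixP => i j; rewrite !mxE mulrDr. Qed.

Lemma tensmxDl {p q r s} (A A' : 'M[C]_(p, q)) (B : 'M[C]_(r, s)) :
  (A + A') *t B = A *t B + A' *t B.
Proof. by apply/matrixP => i j; rewrite !mxE mulrDl. Qed.

Lemma tens_sumr {T} {p q r s} (A : 'M[C]_(p, q)) (L : seq T) (F : T -> 'M[C]_(r, s)) :
  A *t (\sum_(x <- L) F x) = \sum_(x <- L) A *t F x.
Proof.
elim: L => [|x L IH]; first by rewrite !big_nil tensmx0.
by rewrite !big_cons tensmxDr IH.
Qed.

Lemma tens_suml {T} {p q r s} (B : 'M[C]_(r, s)) (L : seq T) (F : T -> 'M[C]_(p, q)) :
  (\sum_(x <- L) F x) *t B = \sum_(x <- L) F x *t B.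
Proof.
elim: L => [|x L IH]; first by rewrite !big_nil tens0mx.
by rewrite !big_cons tensmxDl IH.
Qed.

Lemma tens11 {a b} : (1%:M : 'M[C]_a) *t (1%:M : 'M[C]_b) = 1%:M.
Proof.
apply/matrixP => i j; case: (mxtens_indexP i) => i1 i2; case: (mxtens_indexP j) => j1 j2.
rewrite tensmxE !mxE (inj_eq (can_inj (@mxtens_indexK a b))) xpair_eqE.
by case: eqP => _; case: eqP => _; rewrite ?mulr0 ?mul0r ?mulr1.
Qed.

Lemma tr_tens {a b} (A : 'M[C]_a) (B : 'M[C]_b) : \tr (A *t B) = \tr A * \tr B.
Proof. by rewrite /mxtrace mulr_sum; apply: eq_bigr => k _; rewrite mxE. Qed.

Lemma psd_tr {d k} (A : 'M[C]_d) (Y : 'M[C]_(k, d)) :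
  psd A -> 0 <= \tr (Y *m A *m adj Y).
Proof.
move=> [_ hA]; rewrite /mxtrace; apply: sumr_ge0 => r _.
have := hA (adj (row r Y)); rewrite adjK.
suff -> : (row r Y *m A *m adj (row r Y)) 0 0 = (Y *m A *m adj Y) r r by [].
rewrite !mxE; apply: eq_bigr => l _; rewrite !mxE; congr (_ * _).
by apply: eq_bigr => k' _; rewrite !mxE.
Qed.

Lemma unitary_adj {k} (U : 'M[C]_k) : U \is unitarymx ->
  U *m adj U = 1%:M /\ adj U *m U = 1%:M.
Proof.
move=> hU; have -> : adj U = U ^t* by apply/matrixP => i j; rewrite !mxE.
split; first exact/unitarymxP.
by have := mulmxKtV (1%:M : 'M[C]_k) hU erefl; rewrite mul1mx.
Qed.


Lemma ler_sum_In {T} (L : seq T) (F G : T -> C) :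
  (forall x, List.In x L -> F x <= G x) -> \sum_(x <- L) F x <= \sum_(x <- L) G x.
Proof.
elim: L => [|x L IH] h; first by rewrite !big_nil.
rewrite !big_cons lerD //; first by apply: h; left.
by apply: IH => y hy; apply: h; right.
Qed.

Lemma key d e D (eq : (d * e = D)%N) N (p : 'I_N -> R) (U : 'I_N -> 'M[C]_D)
  (ra : 'M[C]_e) (r0 : 'M[C]_D) T (L : seq T) (ph : T -> 'cV[C]_d) (i : 'I_N) :
  (forall j, 0 <= p j) -> (forall j, U j *m adj (U j) = 1%:M /\ adj (U j) *m U j = 1%:M) ->
  psd ra -> \tr ra = 1 -> \tr r0 = 1 ->
  \sum_(x <- L) ph x *m adj (ph x) = 1%:M ->
  (forall x, List.In x L -> adj (ph x) *m ph x = 1%:M) ->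
  (forall x, List.In x L ->
     \sum_(j < N) rC (p j) *: (U j *m castmx (eq, eq) ((ph x *m adj (ph x)) *t ra) *m adj (U j)) = r0) ->
  p i * (size L)%:R <= 1.
Proof.
case: D / eq U r0 => U r0 hp hU hra tra tr0 hsum hnorm hpqc.
pose P x := (ph x *m adj (ph x)) *t (1%:M : 'M[C]_e).
have sumP : \sum_(x <- L) P x = 1%:M by rewrite -tens_suml hsum tens11.
have e1 : \tr r0 = \sum_(x <- L) \tr (r0 *m (U i *m P x *m adj (U i))).
  rewrite -raddf_sum /= -mulmx_sumr -mulmx_suml -mulmx_sumr sumP mulmx1.
  by rewrite (hU i).1 mulmx1.
suff H : rC (p i) * (size L)%:R <= 1.
  by rewrite -(@lecR R) rmorphM rmorph_nat rmorph1; exact: H.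
rewrite -[X in _ <= X]tr0 e1.
have -> : rC (p i) * (size L)%:R = \sum_(x <- L) rC (p i).
  by rewrite big_const_seq /= count_predT iter_addr_0 mulr_natr.
apply: ler_sum_In => x hx.
rewrite -(hpqc x hx) castmx_id mulmx_suml raddf_sum /= (bigD1 i) //=.
set W := ph x *t (1%:M : 'M[C]_e).
set rp := (1%:M : 'M[C]_1) *t ra.
have hX : (ph x *m adj (ph x)) *t ra = W *m rp *m adj W.
  by rewrite /W /rp adj_tens adj1 !tensmx_mul mulmx1 mul1mx mulmx1.
have hP : P x = W *m adj W by rewrite /P /W adj_tens adj1 tensmx_mul mulmx1.
have prp : psd rp by rewrite /rp tens_scalar1mx; apply: psd_cast.
have trT j : 0 <= \tr (U j *m (W *m rp *m adj W) *m adj (U j) *m (U i *m (W *m adj W) *m adj (U i))).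
  set Y := adj W *m adj (U i) *m U j *m W.
  have -> : \tr (U j *m (W *m rp *m adj W) *m adj (U j) *m (U i *m (W *m adj W) *m adj (U i)))
     = \tr ((U j *m W *m rp *m adj W *m adj (U j) *m U i *m W) *m (adj W *m adj (U i))).
    by rewrite !mulmxA.
  rewrite mxtrace_mulC !mulmxA.
  have -> : adj W *m adj (U i) *m U j *m W *m rp *m adj W *m adj (U j) *m U i *m W
     = Y *m rp *m adj Y by rewrite /Y !adj_mul !adjK !mulmxA.
  exact: psd_tr.
have tri : \tr (U i *m ((ph x *m adj (ph x)) *t ra) *m adj (U i) *m (U i *m P x *m adj (U i))) = 1.
  rewrite -!mulmxA [adj (U i) *m (U i *m _)]mulmxA (hU i).2 mul1mx.
  rewrite mxtrace_mulC -!mulmxA (hU i).2 mulmx1 /P tensmx_mul mulmx1.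
  rewrite mulmxA -(mulmxA (ph x)) (hnorm x hx) mulmx1 tr_tens tra mulr1.
  by rewrite mxtrace_mulC (hnorm x hx) mxtrace1.
rewrite -scalemxAl mxtraceZ tri mulr1 lerDl; apply: sumr_ge0 => j _.
rewrite -scalemxAl mxtraceZ; apply: mulr_ge0; first by rewrite /rC ler0c.
by rewrite hX hP; apply: trT.
Qed.


Lemma castmxD {a a' b b'} (ea : a = a') (eb : b = b') (A B : 'M[C]_(a, b)) :
  castmx (ea, eb) (A + B) = castmx (ea, eb) A + castmx (ea, eb) B.
Proof. by case: a' / ea; case: b' / eb; rewrite !castmx_id. Qed.

Lemma rC_conj (x : R) : (rC x)^* = rC x.
Proof. exact: conjc_real. Qed.

Lemma qubit_norm (t : R) : adj (qubitB t) *m qubitB t = 1%:M.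
Proof.
apply/matrixP => i j; rewrite !ord1 !mxE !big_ord_recl big_ord0 !mxE /= !rC_conj.
rewrite addr0 /rC -!rmorphM -rmorphD -!expr2 cos2Dsin2.
by rewrite rmorph1.
Qed.

Lemma qubit_sum : qubitB (R:=R) 0 *m adj (qubitB 0) + qubitB (pi / 2) *m adj (qubitB (pi / 2))
   = 1%:M :> 'M[C]_2.
Proof.
apply/matrixP => i j; rewrite !mxE !big_ord_recl big_ord0 !mxE /=.
rewrite cos0 sin0 cos_pihalf sin_pihalf big_ord0 /rC !rmorph0 !rmorph1.
by case: i => [[|[|//]] ?]; case: j => [[|[|//]] ?]; rewrite /= ?rmorph0 ?rmorph1 ?mulr0 ?mul0r ?mulr1 ?addr0 ?add0r.
Qed.


Definition scons (b : R) (f : nat -> R) : nat -> R :=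
  fun j => if j is j'.+1 then f j' else b.

Fixpoint Ls (n : nat) : seq (nat -> R) :=
  if n is n'.+1 then map (scons 0) (Ls n') ++ map (scons (pi / 2)) (Ls n')
  else [:: fun _ => 0].

Lemma Ls_size n : size (Ls n) = (2 ^ n)%N.
Proof. by elim: n => [|n IH] //=; rewrite size_cat !size_map IH expnS mul2n addnn. Qed.

Lemma prodB_norm n (t : nat -> R) : adj (prodB n t) *m prodB n t = 1%:M.
Proof.
elim: n t => [|n IH] t.
  by apply/matrixP => i j; rewrite !ord1 !mxE big_ord1 !mxE rmorph1 mulr1.
rewrite [prodB _ _]/= adj_cast castmx_mulmx adj_tens tensmx_mul IH qubit_norm tens11.
by rewrite castmx1.
Qed.

Lemma prodB_scons n a f : prodB n.+1 (scons a f) =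
  castmx (esym (expnS 2 n), muln1 1) (qubitB a *t prodB n f).
Proof. by []. Qed.

Lemma Ls_sum n : \sum_(t <- Ls n) prodB n t *m adj (prodB n t) = 1%:M.
Proof.
elim: n => [|n IH].
  rewrite big_cons big_nil addr0.
  by apply/matrixP => i j; rewrite !ord1 !mxE big_ord1 !mxE rmorph1 mulr1.
have hT a : \sum_(f <- Ls n) prodB n.+1 (scons a f) *m adj (prodB n.+1 (scons a f)) =
   castmx (esym (expnS 2 n), esym (expnS 2 n)) ((qubitB a *m adj (qubitB a)) *t 1%:M).
  rewrite -IH tens_sumr castmx_sum; apply: eq_bigr => f _.
  by rewrite prodB_scons adj_cast castmx_mulmx adj_tens tensmx_mul.
rewrite [Ls _]/= big_cat /= !big_map !hT -castmxD -tensmxDl qubit_sum tens11.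
by rewrite castmx1.
Qed.

Lemma Ls_good n t : List.In t (Ls n) -> forall j, (j < n)%N -> 0 <= t j < 2 * pi.
Proof.
have hpi : 0 < pi :> R by exact: pi_gt0.
elim: n t => [|n IH] t hin [|j] hj //=; move: hin => /List.in_app_iff hin.
- case: hin => /List.in_map_iff [f [<- _]] /=.
    by rewrite lexx /= mulr_gt0.
  rewrite divr_ge0 ?ltW //= ltr_pdivrMr //; lra.
- by case: hin => /List.in_map_iff [f [<- hf]] /=; apply: IH.
Qed.

End Aux.

Theorem corollary9 (R : realType) (n m : nat) (hn : (1 <= n)%N) (hnm : (n <= m)%N)
  (N : nat) (p : 'I_N -> R) (U : 'I_N -> 'M[R[i]]_(2 ^ m))
  (rho_a : 'M[R[i]]_(2 ^ (m - n))) (rho0 : 'M[R[i]]_(2 ^ m)) :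
  (forall i, 0 <= p i) -> \sum_(i < N) p i = 1 ->
  (forall i, U i \is unitarymx) ->
  density rho_a -> density rho0 ->
  PQC hnm (@Btens R n) p U rho_a rho0 ->
  n%:R <= entropy p /\ (2 ^ n <= N)%N.
Proof.
move=> hp hs hU [hra tra] [_ tr0] hpqc.
have hpi i : p i * (2 ^ n)%:R <= 1.
  rewrite -(Ls_size R n).
  apply: (@key R _ _ _ (qubit_dim hnm) N p U rho_a rho0 _ (Ls R n) (@prodB R n) i) => //.
  - by move=> j; apply: unitary_adj.
  - exact: Ls_sum.
  - by move=> x _; exact: prodB_norm.
  - move=> x hx; apply: hpqc; exists x; split => //; exact: Ls_good hx.
split.
- rewrite /entropy -sumrN.
  have -> : n%:R = \sum_i p i * n%:R :> R by rewrite -mulr_suml hs mul1r.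
  apply: ler_sum => i _; case: eqP => [->|/eqP pi0]; first by rewrite mul0r oppr0.
  have pp : 0 < p i by rewrite lt_def pi0 hp.
  have l2 : 0 < ln (2 : R) by apply: ln_gt0; lra.
  have hl : ln (p i) + ln 2 *+ n <= 0.
    have := ln_le0 (hpi i).
    rewrite (@lnM _ (p i)) ?posrE ?natrX ?exprn_gt0 // lnXn //.
  rewrite /log2 -mulrN; apply: ler_wpM2l; first exact: hp.
  rewrite -mulNr ler_pdivlMr //; move: hl; rewrite -mulr_natr; lra.
- have h : (2 ^ n)%:R <= N%:R :> R.
    have -> : (N%:R : R) = \sum_(i < N) 1 by rewrite sumr_const card_ord.
    rewrite -[X in X <= _]mul1r -[X in X * _ <= _]hs mulr_suml; apply: ler_sum => i _; exact: hpi.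
  by rewrite ler_nat in h.
Qed.
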